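(* Let $X$ be an algebraic variety, $t\in\mathcal{T}(X)$ and $s\in\mathcal{S}(X)$. Then $t\cdot s\in\mathcal{S}(X)$.
   Context: An affine algebraic variety is a topological space with a sheaf of real-valued functions isomorphic as a ringed space (via a ''closed embedding'' $i$) to an algebraic set $Y\subset\mathbb{R}^n$ (common zero locus of real polynomials) with its Zariski topology and sheaf of regular functions. An algebraic variety is a topological space with a sheaf of real-valued functions admitting a finite open cover by affine algebraic varieties. For affine $X$: $\mathcal{S}(X)$ is the space of $f$ such that $f\circ i^{-1}$ is the restriction to $i(X)$ of a classical Schwartz function on $\mathbb{R}^n$; $\mathcal{T}(X)$ is the space of $f$ such that $f\circ i^{-1}$ is the restriction of a tempered function on $\mathbb{R}^n$ (a smooth function all of whose partial derivatives are bounded by $C(1+|x|^2)^N$ for some $C,N$); both are independent of $i$. For a general algebraic variety $X$ with a finite affine open cover $X=\bigcup_{i=1}^kX_i$: $\mathcal{S}(X)$ is the set of functions $\sum_{i=1}^k\mathrm{Ext}_{X_i}^X(s_i)$, $s_i\in\mathcal{S}(X_i)$, $\mathrm{Ext}$ = extension by zero (independent of the cover); $\mathcal{T}(X)$ is the set of $t:X\to\mathbb{R}$ with $t|_{X_i}\in\mathcal{T}(X_i)$ for all $i$ (for some, equivalently every, finite affine open cover). *)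

(* Defs.v *)
From HB Require Import structures.
From mathcomp Require Import all_boot all_order all_algebra.
From mathcomp Require Import all_classical all_reals all_analysis.
Set Implicit Arguments. Unset Strict Implicit. Unset Printing Implicit Defensive.
Import Order.TTheory GRing.Theory Num.Theory.
Import numFieldNormedType.Exports.
Local Open Scope classical_set_scope.
Local Open Scope ring_scope.

Section Defs.
Variable R : realType.

Definition iterD (n : nat) (l : seq 'I_n) (f : 'rV[R]_n -> R) : 'rV[R]_n -> R :=
  foldr (fun j g => 'D_(delta_mx 0 j) g) f l.

Definition smooth (n : nat) (f : 'rV[R]_n -> R) : Prop :=
  forall l : seq 'I_n, continuous (iterD l f) /\
    forall (j : 'I_n) (x : 'rV[R]_n), derivable (iterD l f) x (delta_mx 0 j).

Definition sqn (n : nat) (x : 'rV[R]_n) : R := \sum_(j < n) x ord0 j ^+ 2.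

Definition schwartz (n : nat) (f : 'rV[R]_n -> R) : Prop :=
  smooth f /\ forall (l : seq 'I_n) (N : nat), exists C : R,
    forall x, (1 + sqn x) ^+ N * `|iterD l f x| <= C.

Definition tempered (n : nat) (f : 'rV[R]_n -> R) : Prop :=
  smooth f /\ forall l : seq 'I_n, exists (C : R) (N : nat),
    forall x, `|iterD l f x| <= C * (1 + sqn x) ^+ N.

Inductive polyfun (n : nat) : ('rV[R]_n -> R) -> Prop :=
| pf_const (c : R) : polyfun (fun _ => c)
| pf_coord (j : 'I_n) : polyfun (fun x => x ord0 j)
| pf_add f g : polyfun f -> polyfun g -> polyfun (fun x => f x + g x)
| pf_mul f g : polyfun f -> polyfun g -> polyfun (fun x => f x * g x).

Definition algebraic_set (n : nat) (Y : set 'rV[R]_n) : Prop :=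
  exists P : set ('rV[R]_n -> R), (forall p, P p -> polyfun p) /\
    Y = [set x | forall p, P p -> p x = 0].

Definition zariski_open_in (n : nat) (Y V : set 'rV[R]_n) : Prop :=
  exists Z, algebraic_set Z /\ V = Y `\` Z.

Definition regular_on (n : nat) (Y V : set 'rV[R]_n) (g : 'rV[R]_n -> R) : Prop :=
  forall y, V y -> exists p q Wz, [/\ polyfun p /\ polyfun q, zariski_open_in Y Wz,
    Wz y, (Wz `<=` V) & forall z, Wz z -> q z != 0 /\ g z = p z / q z].

(* O U = the functions (given as functions on X; only values on U matter)
   that are sections of the structure sheaf over the open U *)
Definition sheaf_of_functions (X : topologicalType) (O : set X -> set (X -> R)) : Prop :=
  (forall U f g, open U -> (forall x, U x -> f x = g x) -> O U f -> O U g) /\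
  (forall U f, open U ->
     (O U f <-> forall x, U x -> exists Wx, [/\ open Wx, Wx x, (Wx `<=` U) & O Wx f])).

Record chart (X : topologicalType) := Chart {
  ch_U : set X;
  ch_n : nat;
  ch_Y : set 'rV[R]_ch_n;
  ch_i : X -> 'rV[R]_ch_n }.
Arguments ch_U {X} c _.
Arguments ch_n {X} c.
Arguments ch_Y {X} c _.
Arguments ch_i {X} c _.

(* (U, O|_U) is isomorphic as a ringed space, via i, to the algebraic set Y
   with its Zariski topology and sheaf of regular functions *)
Definition affine_chart (X : topologicalType) (O : set X -> set (X -> R))
    (c : chart X) : Prop :=
  [/\ open (ch_U c) /\ algebraic_set (ch_Y c),
      (forall x y, ch_U c x -> ch_U c y -> ch_i c x = ch_i c y -> x = y),
      ch_i c @` ch_U c = ch_Y c,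
      (forall V, V `<=` ch_U c -> (open V <-> zariski_open_in (ch_Y c) (ch_i c @` V)))
    & (forall V g, V `<=` ch_U c -> open V ->
         (regular_on (ch_Y c) (ch_i c @` V) g <-> O V (g \o ch_i c)))].

Definition affine_cover (X : topologicalType) (O : set X -> set (X -> R))
    (k : nat) (cs : 'I_k -> chart X) : Prop :=
  (forall j, affine_chart O (cs j)) /\ (forall x, exists j, ch_U (cs j) x).

Definition algebraic_variety (X : topologicalType) (O : set X -> set (X -> R)) : Prop :=
  sheaf_of_functions O /\ exists k (cs : 'I_k -> chart X), affine_cover O cs.

Definition schwartz_chart (X : topologicalType) (c : chart X) (f : X -> R) : Prop :=
  exists phi, schwartz phi /\ forall x, ch_U c x -> f x = phi (ch_i c x).

Definition tempered_chart (X : topologicalType) (c : chart X) (f : X -> R) : Prop :=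
  exists phi, tempered phi /\ forall x, ch_U c x -> f x = phi (ch_i c x).

Definition ext_zero (X : Type) (U : set X) (f : X -> R) : X -> R :=
  fun x => if `[< U x >] then f x else 0.

Definition Schwartz_space (X : topologicalType) (O : set X -> set (X -> R))
    (f : X -> R) : Prop :=
  exists k (cs : 'I_k -> chart X) (s : 'I_k -> X -> R),
    [/\ affine_cover O cs, (forall j, schwartz_chart (cs j) (s j))
      & f = fun x => \sum_(j < k) ext_zero (ch_U (cs j)) (s j) x].

(* T(X) (the "every finite affine open cover" reading) *)
Definition Tempered_space (X : topologicalType) (O : set X -> set (X -> R))
    (t : X -> R) : Prop :=
  forall k (cs : 'I_k -> chart X), affine_cover O cs ->
    forall j, tempered_chart (cs j) t.

End Defs.

(* Main.v *)
Require Import Defs.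
From HB Require Import structures.
From mathcomp Require Import all_boot all_order all_algebra.
From mathcomp Require Import all_classical all_reals all_analysis.
Set Implicit Arguments. Unset Strict Implicit. Unset Printing Implicit Defensive.
Import Order.TTheory GRing.Theory Num.Theory.
Import numFieldNormedType.Exports.
Local Open Scope classical_set_scope.
Local Open Scope ring_scope.

Section Helpers.
Variable R : realType.

Lemma sumprod_der (V : normedModType R) (T : Type) (L : seq T)
  (a b : T -> V -> R) (x v : V) :
  (forall p, derivable (a p) x v /\ derivable (b p) x v) ->
  derivable (fun y => \sum_(p <- L) a p y * b p y) x v /\
  'D_v (fun y => \sum_(p <- L) a p y * b p y) x =
    \sum_(p <- L) ('D_v (a p) x * b p x + a p x * 'D_v (b p) x).
Proof.
move=> H; elim: L => [|p L [IHd IHe]].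
  have -> : (fun y => \sum_(p <- [::]) a p y * b p y) = cst 0.
    by apply/funext => y; rewrite big_nil.
  by rewrite big_nil; split; [exact: derivable_cst | exact: derive_cst].
have -> : (fun y => \sum_(q <- p :: L) a q y * b q y) =
   (a p * b p) + (fun y => \sum_(q <- L) a q y * b q y).
  by apply/funext => y; rewrite big_cons.
have [da db] := H p.
split; first by apply: derivableD => //; apply: derivableM.
rewrite deriveD //; last by apply: derivableM.
rewrite deriveM // IHe big_cons; congr (_ + _).
by rewrite /GRing.scale /= addrC mulrC [a p x * _]mulrC.
Qed.

Lemma sumprod_cont (V : topologicalType) (T : Type) (L : seq T)
  (a b : T -> V -> R) :
  (forall p, continuous (a p) /\ continuous (b p)) ->
  continuous (fun y => \sum_(p <- L) a p y * b p y).
Proof.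
move=> H; elim: L => [|p L IH].
  have -> : (fun y => \sum_(p <- [::]) a p y * b p y) = cst 0.
    by apply/funext => y; rewrite big_nil.
  exact: cst_continuous.
have -> : (fun y => \sum_(q <- p :: L) a q y * b q y) =
   (a p \* b p) + (fun y => \sum_(q <- L) a q y * b q y).
  by apply/funext => y; rewrite big_cons.
have [ca cb] := H p.
move=> x; apply: continuousD; last exact: IH.
by apply: continuousM; [exact: ca | exact: cb].
Qed.

Lemma iterD_mul n (f g : 'rV[R]_n -> R) : smooth f -> smooth g ->
  forall l, exists L : seq ((seq 'I_n) * (seq 'I_n))%type,
    Defs.iterD l (fun x => f x * g x) =
      fun x => \sum_(p <- L) Defs.iterD p.1 f x * Defs.iterD p.2 g x.
Proof.
move=> sf sg; elim => [|j l [L IH]].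
  exists [:: ([::], [::])]; apply/funext => x; by rewrite big_seq1.
exists ([seq (j :: p.1, p.2) | p <- L] ++ [seq (p.1, j :: p.2) | p <- L]).
rewrite /= -/(Defs.iterD l _) IH; apply/funext => x.
have [_ ->] := @sumprod_der _ _ L (fun p => Defs.iterD p.1 f) (fun p => Defs.iterD p.2 g)
   x (delta_mx 0 j) (fun p => conj ((sf p.1).2 j x) ((sg p.2).2 j x)).
by rewrite big_cat !big_map /= big_split.
Qed.

Lemma smooth_mul n (f g : 'rV[R]_n -> R) : smooth f -> smooth g ->
  smooth (fun x => f x * g x).
Proof.
move=> sf sg l; have [L ->] := iterD_mul sf sg l; split.
  apply: (@sumprod_cont _ _ L (fun p => Defs.iterD p.1 f) (fun p => Defs.iterD p.2 g)).
  by move=> p; split; [exact: (sf p.1).1 | exact: (sg p.2).1].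
move=> j x.
have [d _] := @sumprod_der _ _ L (fun p => Defs.iterD p.1 f) (fun p => Defs.iterD p.2 g)
   x (delta_mx 0 j) (fun p => conj ((sf p.1).2 j x) ((sg p.2).2 j x)).
exact: d.
Qed.

Lemma bound_sum (X T : Type) (L : seq T) (F : T -> X -> R) (w : X -> R) :
  (forall x, 0 <= w x) ->
  (forall p, exists C, forall x, w x * `|F p x| <= C) ->
  exists C, forall x, w x * `|\sum_(p <- L) F p x| <= C.
Proof.
move=> w0 H; elim: L => [|p L [C2 IH]].
  by exists 0 => x; rewrite big_nil normr0 mulr0.
have [C1 H1] := H p.
exists (C1 + C2) => x; rewrite big_cons.
apply: le_trans (_ : w x * (`|F p x| + `|\sum_(q <- L) F q x|) <= _).
  by apply: ler_wpM2l => //; apply: ler_normD.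
by rewrite mulrDr; apply: lerD.
Qed.

Lemma sqn_ge0 n (x : 'rV[R]_n) : 0 <= sqn x.
Proof. by apply: sumr_ge0 => j _; apply: sqr_ge0. Qed.

Lemma schwartz_mul n (f g : 'rV[R]_n -> R) : tempered f -> schwartz g ->
  schwartz (fun x => f x * g x).
Proof.
move=> [sf tf] [sg bg]; split; first exact: smooth_mul.
move=> l N; have [L ->] := iterD_mul sf sg l.
have s0 : forall x : 'rV[R]_n, 0 < 1 + sqn x.
  by move=> x; apply: ltr_pwDl => //; apply: sqn_ge0.
apply: bound_sum => [x|p]; first by apply: exprn_ge0; apply: ltW.
have [C1 [N1 H1]] := tf p.1.
have [C2 H2] := bg p.2 (N + N1)%N.
exists (`|C1| * C2) => x.
set s := 1 + sqn x.
have sp : 0 <= s by exact: ltW (s0 x).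
have ha : `|Defs.iterD p.1 f x| <= `|C1| * s ^+ N1.
  apply: le_trans (H1 x) _; apply: ler_wpM2r; first exact: exprn_ge0.
  exact: ler_norm.
rewrite normrM mulrA.
apply: le_trans (_ : s ^+ N * (`|C1| * s ^+ N1) * `|Defs.iterD p.2 g x| <= _).
  apply: ler_wpM2r => //; apply: ler_wpM2l => //; exact: exprn_ge0.
have -> : s ^+ N * (`|C1| * s ^+ N1) * `|Defs.iterD p.2 g x| =
   `|C1| * (s ^+ (N + N1) * `|Defs.iterD p.2 g x|).
  by rewrite exprD mulrCA !mulrA.
by apply: ler_wpM2l => //; apply: H2.
Qed.

End Helpers.

Theorem proposition5p6 (R : realType) (X : topologicalType)
    (O : set X -> set (X -> R)) (HX : algebraic_variety O)
    (t s : X -> R) :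
  Tempered_space O t -> Schwartz_space O s ->
  Schwartz_space O (fun x => t x * s x).
Proof.
move=> Ht [k [cs [sj [Hcov Hsc ->]]]].
exists k, cs, (fun j x => t x * sj j x); split => //.
- move=> j; have [pt [tp Et]] := Ht k cs Hcov j.
  have [ps [sp Es]] := Hsc j.
  exists (fun x => pt x * ps x); split; first exact: schwartz_mul.
  by move=> x Ux; rewrite Et // Es.
- apply/funext => x /=; rewrite mulr_sumr; apply: eq_bigr => j _.
  by rewrite /ext_zero; case: ifP => _ //; rewrite mulr0.
Qed.
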